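(* Let $G$ be a finite abelian group. Let $n \in \mathbb{N}_0$ and let $\overline{\ell}=(\ell_1,\dots, \ell_n) \in \mathbb{N}^n$ with $\ell_{i}< \ell_{i+1}$ for each $i \in [1, n-1]$. For $m \in \mathbb{N}_0$ and $i \in [1,n]$, define recursively \[k_{i}^{\overline{\ell}}(m) = \max\left\{0 , \left \lceil \frac{ m - ( \sum_{j=1}^{i-1} k_j^{\overline{\ell}}(m)\ell_j ) - \mathsf{s}_{\le \ell_{i}}(G) + 1}{\ell_i}\right \rceil \right\}\] and \[k_{n+1}^{\overline{\ell}}(m)= \max \left\{0, \left\lceil \frac{ m - \sum_{j=1}^{n} k_j^{\overline{\ell}}(m)\ell_j }{\mathsf{D}(G)}\right \rceil \right\}.\] (1) For every zero-sum sequence $B$ over $G$, $\max \mathsf{L}(B) \ge \sum_{i=1}^{n+1} k_i^{\overline{\ell}}(|B|)$. (2) Let $k \in \mathbb{N}$ and let $M\in \mathbb{N}$ be maximal such that $\sum_{i=1}^{n+1} k_i^{\overline{\ell}}(M) \le k$. Then $\mathsf{D}_{k}(G)\le M$.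
   Context: A sequence over $G$ is a finite unordered list of elements of $G$ with repetitions allowed; $|S|$ is its length. A zero-sum sequence has terms summing to $0$; a minimal zero-sum sequence is a non-empty zero-sum sequence with no proper non-empty zero-sum subsequence. For a zero-sum sequence $B$, $\mathsf{L}(B)$ is the set of all $t$ such that $B$ is a product of $t$ minimal zero-sum sequences. $\mathsf{D}_k(G)$ is the smallest $\ell$ such that every sequence of length at least $\ell$ has $k$ disjoint non-empty zero-sum subsequences; $\mathsf{D}(G)=\mathsf{D}_1(G)$. For $\ell\in\mathbb{N}$, $\mathsf{s}_{\le \ell}(G)\in\mathbb{N}\cup\{\infty\}$ is the smallest $n$ such that every sequence over $G$ of length at least $n$ has a non-empty zero-sum subsequence of length at most $\ell$. $[a,b]$ denotes the integers between $a$ and $b$. *)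

(* Defs.v *)
From HB Require Import structures.
From mathcomp Require Import all_boot all_order all_algebra.
From Stdlib Require Import ClassicalEpsilon Wf_nat.
Set Implicit Arguments. Unset Strict Implicit. Unset Printing Implicit Defensive.
Import Order.TTheory GRing.Theory Num.Theory.

(* Sequences over G are modelled by [seq G] up to permutation ([perm_eq]). *)

(* Least natural number satisfying P, or None (= infinity) if there is none. *)
Lemma least_ex (P : nat -> Prop) :
  (exists n, P n) -> exists n, P n /\ forall m, P m -> n <= m.
Proof.
move=> H.
have [n [[Pn Hmin] _]] :=
  dec_inh_nat_subset_has_unique_least_element P (fun n => classic (P n)) H.
by exists n; split=> // m Pm; apply/ssrnat.leP; apply: Hmin.
Qed.

Definition min_nat (P : nat -> Prop) : option nat :=
  match excluded_middle_informative (exists n, P n) with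
  | left H => Some (proj1_sig (constructive_indefinite_description _ (least_ex H)))
  | right _ => None
  end.

Local Open Scope ring_scope.

Definition seq_sum (G : finZmodType) (s : seq G) : G := \sum_(x <- s) x.
Definition zero_sum (G : finZmodType) (s : seq G) : Prop := seq_sum s = 0.

(* U is a subsequence of T with complement V  <->  perm_eq T (U ++ V) *)
Definition minimal_zero_sum (G : finZmodType) (T : seq G) : Prop :=
  [/\ T != [::], zero_sum T &
      forall U V : seq G, perm_eq T (U ++ V) -> U != [::] -> zero_sum U -> V = [::]].

Definition in_L (G : finZmodType) (B : seq G) (t : nat) : Prop :=
  exists Ts : seq (seq G),
    [/\ size Ts = t, (forall T, T \in Ts -> minimal_zero_sum T) & perm_eq B (flatten Ts)].

Definition has_disjoint_zs (G : finZmodType) (k : nat) (S : seq G) : Prop :=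
  exists (Ts : seq (seq G)) (R : seq G),
    [/\ size Ts = k, (forall T, T \in Ts -> T != [::] /\ zero_sum T)
      & perm_eq S (flatten Ts ++ R)].

Definition Dk (G : finZmodType) (k : nat) : option nat :=
  min_nat (fun n => forall S : seq G, (n <= size S)%N -> has_disjoint_zs k S).

(* D(G) = D_1(G), as a natural number (D_1(G) is finite for finite G) *)
Definition Dav (G : finZmodType) : nat := odflt 0%N (Dk G 1).

Definition has_short_zs (G : finZmodType) (l : nat) (S : seq G) : Prop :=
  exists U V : seq G,
    [/\ perm_eq S (U ++ V), U != [::], zero_sum U & (size U <= l)%N].

Definition s_le (G : finZmodType) (l : nat) : option nat :=
  min_nat (fun n => forall S : seq G, (n <= size S)%N -> has_short_zs l S).

Definition kval (G : finZmodType) (l m : nat) (acc : int) : int :=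
  match s_le G l with
  | None => 0
  | Some s => Num.max 0 (Num.ceil ((m%:~R - acc%:~R - s%:~R + 1) / l%:~R : rat))
  end.

(* kpref G ls m i = [:: k_1(m); ...; k_i(m)] for ls = (l_1, ..., l_n) *)
Fixpoint kpref (G : finZmodType) (ls : seq nat) (m : nat) (i : nat) : seq int :=
  match i with
  | 0 => [::]
  | i'.+1 =>
    let p := kpref G ls m i' in
    rcons p (kval G (nth 0%N ls i') m
                  (\sum_(j < i') nth 0 p j * (nth 0%N ls j)%:~R))
  end.

Definition klast (G : finZmodType) (ls : seq nat) (m : nat) : int :=
  let p := kpref G ls m (size ls) in
  Num.max 0 (Num.ceil ((m%:~R - (\sum_(j < size ls) nth 0 p j * (nth 0%N ls j)%:~R)%:~R)
                       / (Dav G)%:~R : rat)).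

Definition ktot (G : finZmodType) (ls : seq nat) (m : nat) : int :=
  \sum_(j < size ls) nth 0 (kpref G ls m (size ls)) j + klast G ls m.

(* Main.v *)
Require Import Defs.
From HB Require Import structures.
From mathcomp Require Import all_boot all_order all_algebra.
From mathcomp Require Import zify ring lra.
From Stdlib Require Import Classical ClassicalEpsilon.
Import Order.TTheory GRing.Theory Num.Theory.
Set Implicit Arguments. Unset Strict Implicit.
Local Open Scope ring_scope.

Lemma seq_sum_cat (G : finZmodType) (s1 s2 : seq G) :
  seq_sum (s1 ++ s2) = seq_sum s1 + seq_sum s2.
Proof. by rewrite /seq_sum big_cat. Qed.

Lemma seq_sum_perm (G : finZmodType) (s1 s2 : seq G) :
  perm_eq s1 s2 -> seq_sum s1 = seq_sum s2.
Proof. exact: perm_big. Qed.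

Lemma minimal_sub (G : finZmodType) (U : seq G) :
  U != [::] -> zero_sum U ->
  exists T W, perm_eq U (T ++ W) /\ minimal_zero_sum T.
Proof.
move=> hU hz; have [n hs] : exists n, (size U <= n)%N by exists (size U).
elim: n U hs hU hz => [|n IH] U hs hU hz.
  by case: U hs hU hz.
case: (classic (minimal_zero_sum U)) => hm.
  by exists U, [::]; rewrite cats0.
case: (classic (exists U1 V1, [/\ perm_eq U (U1 ++ V1), U1 != [::],
                 zero_sum U1 & V1 != [::]])).
  move=> [U1 [V1 [hp h1 hz1 hv]]].
  have hsz : size U = (size U1 + size V1)%N by rewrite (perm_size hp) size_cat.
  have hv0 : (0 < size V1)%N by case: (V1) hv.
  have hlt : (size U1 <= n)%N by lia.
  have [T [W1 [hp1 hm1]]] := IH U1 hlt h1 hz1.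
  exists T, (W1 ++ V1); split=> //.
  by rewrite catA; apply: (perm_trans hp); rewrite perm_cat2r.
move=> hn; exfalso; apply: hm; split=> // U1 V1 hp h1 hz1.
case: (altP (V1 =P [::])) => // hv; exfalso; apply: hn.
by exists U1, V1.
Qed.

Lemma zero_sum_flatten (G : finZmodType) (Ts : seq (seq G)) :
  (forall T, T \in Ts -> zero_sum T) -> zero_sum (flatten Ts).
Proof.
elim: Ts => [|T Ts IH] h; first by rewrite /zero_sum /seq_sum big_nil.
rewrite /= /zero_sum seq_sum_cat (h T (mem_head _ _)) IH ?add0r //.
by move=> T' hT'; apply: h; rewrite in_cons hT' orbT.
Qed.

Lemma factor (G : finZmodType) (R : seq G) :
  zero_sum R -> exists Ts, (forall T, T \in Ts -> minimal_zero_sum T)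
                            /\ perm_eq R (flatten Ts).
Proof.
move=> hz; have [n hs] : exists n, (size R <= n)%N by exists (size R).
elim: n R hs hz => [|n IH] R hs hz.
  by case: R hs hz => // _ _; exists [::].
case: (altP (R =P [::])) => [->|hR]; first by exists [::].
have [T [W [hp hm]]] := minimal_sub hR hz.
have [hT hzT _] := hm.
have hzW : zero_sum W.
  move: hz; rewrite /zero_sum (seq_sum_perm hp) seq_sum_cat hzT add0r //.
have hsz : size R = (size T + size W)%N by rewrite (perm_size hp) size_cat.
have hv0 : (0 < size T)%N by case: (T) hT.
have hlt : (size W <= n)%N by lia.
have [Ts [hall hp2]] := IH W hlt hzW.
exists (T :: Ts); split.
  by move=> T'; rewrite in_cons => /orP [/eqP ->|]; [|apply: hall].
by apply: (perm_trans hp); rewrite /= perm_cat2l.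
Qed.

Lemma min_len (G : finZmodType) (T : seq G) D :
  (forall S : seq G, (D <= size S)%N -> has_disjoint_zs 1 S) ->
  minimal_zero_sum T -> (size T <= D)%N.
Proof.
move=> hD [hne hz hmin]; rewrite leqNgt; apply/negP => hlt.
case: T hne hz hmin hlt => // x T' _ hz hmin hlt.
have hle : (D <= size T')%N by simpl in hlt; lia.
have [Ts [R [hs hall hp]]] := hD T' hle.
case: Ts hs hall hp => [|U [|]] //= _ hall hp.
have [hU hzU] := hall U (mem_head _ _).
have : perm_eq (x :: T') (U ++ x :: R).
  rewrite -[x :: R]cat1s perm_sym perm_catCA /= perm_cons perm_sym; by rewrite cats0 in hp.
by move=> /(hmin _ _)/(_ hU hzU).
Qed.

Lemma min_nat_some (P : nat -> Prop) d : min_nat P = Some d -> P d.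
Proof.
rewrite /min_nat; case: excluded_middle_informative => // H [<-].
by case: (constructive_indefinite_description _ _) => /= x [].
Qed.

Lemma min_nat_le (P : nat -> Prop) n : P n -> exists d, min_nat P = Some d /\ (d <= n)%N.
Proof.
move=> Pn; rewrite /min_nat; case: excluded_middle_informative => H.
  case: (constructive_indefinite_description _ _) => /= x [_ hx].
  by exists x; split=> //; apply: hx.
by exfalso; apply: H; exists n.
Qed.

Lemma stage (G : finZmodType) l s
  (hs : forall S : seq G, (s <= size S)%N -> has_short_zs l S) k :
  forall S : seq G, ((0 < k)%N -> (k.-1 * l + s <= size S)%N) ->
  exists Ts R, [/\ size Ts = k, (forall T, T \in Ts -> minimal_zero_sum T),
                   (sumn (map size Ts) <= k * l)%N & perm_eq S (flatten Ts ++ R)].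
Proof.
elim: k => [|k IH] S hS.
  by exists [::], S.
have h1 : (k * l + s <= size S)%N by apply: hS.
have [U [V [hp hU hzU hsU]]] : has_short_zs l S.
  by apply: hs; move: h1; move: (k * l)%N => z; lia.
have [T [W [hpU hm]]] := minimal_sub hU hzU.
have hsz : size S = (size T + size (W ++ V))%N.
  by rewrite (perm_size hp) !size_cat (perm_size hpU) size_cat addnA.
have hsT : (size T <= l)%N.
  by apply: leq_trans hsU; rewrite (perm_size hpU) size_cat leq_addr.
have hk : (0 < k)%N -> (k.-1 * l + s <= size (W ++ V))%N.
  move=> hk0; case: k h1 hk0 {IH hS} => // k h1 _ /=.
  move: h1; rewrite mulSn; move: (k * l)%N => z.
  move=> hh; move: hh hsT; rewrite hsz; move: (size T) (size (W ++ V)) => a b; lia.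
have [Ts [R [hs1 hall hsum hp2]]] := IH _ hk.
exists (T :: Ts), R; split=> //=.
- by rewrite hs1.
- by move=> T'; rewrite in_cons => /orP [/eqP ->|]; [|apply: hall].
- by rewrite mulSn leq_add.
- apply: (perm_trans hp); rewrite -catA.
  apply: (@perm_trans _ ((T ++ W) ++ V)); first by rewrite perm_cat2r.
  by rewrite -catA perm_cat2l.
Qed.

Lemma sumn_size_le (G : finZmodType) (Ts : seq (seq G)) D :
  (forall T, T \in Ts -> (size T <= D)%N) -> (sumn (map size Ts) <= size Ts * D)%N.
Proof.
elim: Ts => [|T Ts IH] h //=.
rewrite mulSn leq_add ?h ?mem_head // IH // => T' hT'.
by apply: h; rewrite in_cons hT' orbT.
Qed.

Lemma size_kpref (G : finZmodType) ls m i : size (kpref G ls m i) = i.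
Proof. by elim: i => //= i IH; rewrite size_rcons IH. Qed.

Lemma kpref_nth (G : finZmodType) ls m i n j :
  (i <= n)%N -> (j < i)%N -> nth 0 (kpref G ls m i) j = nth 0 (kpref G ls m n) j.
Proof.
elim: n => [|n IH] hin hj; first by move: hin hj; rewrite leqn0 => /eqP ->.
move: hin; rewrite leq_eqVlt => /orP [/eqP -> //|hin].
by rewrite IH // /= nth_rcons size_kpref (leq_trans hj hin).
Qed.

Lemma kpref_last (G : finZmodType) ls m i :
  nth 0 (kpref G ls m i.+1) i =
  kval G (nth 0%N ls i) m (\sum_(j < i) nth 0 (kpref G ls m i) j * (nth 0%N ls j)%:~R).
Proof. by rewrite /= nth_rcons size_kpref ltnn eqxx. Qed.

Lemma kval_ge0 (G : finZmodType) l m acc : 0 <= kval G l m acc.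
Proof. by rewrite /kval; case: s_le => // s; rewrite le_max lexx. Qed.

Lemma kpref_ge0 (G : finZmodType) ls m i j : 0 <= nth 0 (kpref G ls m i) j.
Proof.
elim: i j => [|i IH] j /=; first by rewrite nth_nil.
rewrite nth_rcons; case: ifP => _ //; case: ifP => _ //; exact: kval_ge0.
Qed.

Lemma A1 (l s m : nat) (acc : int) (r : nat) :
  (0 < l)%N -> m%:Z - acc <= r%:Z ->
  0 < Num.max 0 (Num.ceil (((m%:~R - acc%:~R - s%:~R + 1) / l%:~R) : rat)) ->
  (Num.max 0 (Num.ceil (((m%:~R - acc%:~R - s%:~R + 1) / l%:~R) : rat)) - 1) * l%:Z
     + s%:Z <= r%:Z.
Proof.
move=> hl hr.
have := ceilB1_lt (((m%:~R - acc%:~R - s%:~R + 1) / l%:~R) : rat).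
move: (Num.ceil _) => c hlt.
case: (leP 0 c) => h; last by rewrite ltxx.
move=> _.
move: hlt; rewrite ltr_pdivlMr ?ltr0z // => hlt.
have : (((c - 1) * l%:Z)%:~R : rat) < ((m%:Z - acc - s%:Z + 1)%:~R : rat).
  by move: hlt; rewrite !(intrM, intrD, intrN, mulr1z).
rewrite ltr_int; lia.
Qed.

Lemma A2 (x : int) (D t : nat) :
  x <= (t * D)%N%:Z ->
  Num.max 0 (Num.ceil ((x%:~R / D%:~R) : rat)) <= t%:Z.
Proof.
move=> hx; case: (posnP D) => [->|hD].
  by rewrite invr0 mulr0 ceil0 maxxx.
rewrite ge_max /= ceil_le_int ler_pdivrMr ?ltr0z //.
by rewrite -intrM ler_int -PoszM.
Qed.

Lemma arith1 (a b r d : nat) (c : int) :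
  d%:Z - c <= (a + r)%N%:Z -> (a <= b)%N -> d%:Z - (c + b%:Z) <= r%:Z.
Proof. lia. Qed.

Lemma part1 (G : finZmodType) (ls : seq nat) :
  (forall l, l \in ls -> (0 < l)%N) ->
  forall B : seq G, zero_sum B ->
     exists t : nat, in_L B t /\ ktot G ls (size B) <= t%:Z.
Proof.
move=> hpos B hB.
set m := size B.
set P := kpref G ls m (size ls).
have inv : forall i, (i <= size ls)%N -> exists Ts R,
  [/\ (size Ts)%:Z = \sum_(j < i) nth 0 P j,
      (forall T, T \in Ts -> minimal_zero_sum T),
      perm_eq B (flatten Ts ++ R) &
      m%:Z - \sum_(j < i) nth 0 P j * (nth 0%N ls j)%:~R <= (size R)%:Z].
  elim=> [|i IH] hi.
    by exists [::], B; rewrite !big_ord0 subr0.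
  have [Ts [R [hs hall hp hr]]] := IH (ltnW hi).
  set acc := \sum_(j < i) nth 0 P j * (nth 0%N ls j)%:~R in hr.
  have hK : nth 0 P i = kval G (nth 0%N ls i) m acc.
    rewrite /P -(@kpref_nth G ls m i.+1 (size ls)) // kpref_last.
    congr kval; apply: eq_bigr => j _.
    by rewrite (@kpref_nth G ls m i (size ls)) // ltnW.
  have hl : (0 < nth 0%N ls i)%N by apply: hpos; rewrite mem_nth.
  rewrite !big_ord_recr /= -/acc.
  have hK0 : 0 <= nth 0 P i by apply: kpref_ge0.
  move: hK0 hK; case: (nth 0 P i) => // k _ hK.
  case E: (s_le G (nth 0%N ls i)) hK => [s|]; last first.
    rewrite /kval E => -[->].
    exists Ts, R; split=> //; first by rewrite hs addr0.
    by rewrite mul0r addr0.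
  rewrite /kval E => hK.
  have hs' := min_nat_some E.
  have hk : (0 < k)%N -> ((k.-1 * nth 0%N ls i) + s <= size R)%N.
    move=> hk0; have := @A1 _ s _ _ _ hl hr; rewrite -hK => /(_ ltac:(by rewrite ltz_nat)).
    case: k hk0 {hK} => // k _ /=.
    by rewrite -[k.+1]addn1 PoszD addrK -PoszM -PoszD lez_nat.
  have [Ts' [R' [hs1 hall1 hsum hp1]]] := stage hs' hk.
  exists (Ts ++ Ts'), R'; split.
  - by rewrite size_cat PoszD hs hs1.
  - by move=> T; rewrite mem_cat => /orP [];[apply: hall|apply: hall1].
  - by rewrite flatten_cat -catA; apply: (perm_trans hp); rewrite perm_cat2l.
  - have hszR : size R = (sumn (map size Ts') + size R')%N.
      by rewrite (perm_size hp1) size_cat size_flatten.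
    move: hr hsum; rewrite intz hszR -PoszM.
    exact: arith1.
have [Ts [R [hs hall hp hr]]] := inv _ (leqnn _).
have hzR : zero_sum R.
  have hzT : zero_sum (flatten Ts).
    by apply: zero_sum_flatten => T /hall [].
  by move: hB; rewrite /zero_sum (seq_sum_perm hp) seq_sum_cat hzT add0r.
have [Ts2 [hall2 hp2]] := factor hzR.
exists (size (Ts ++ Ts2)); split.
  exists (Ts ++ Ts2); split=> //.
    by move=> T; rewrite mem_cat => /orP [];[apply: hall|apply: hall2].
  by rewrite flatten_cat; apply: (perm_trans hp); rewrite perm_cat2l.
rewrite /ktot size_cat PoszD -/P -hs lerD2l.
set acc := \sum_(j < size ls) nth 0 P j * (nth 0%N ls j)%:~R in hr.
have -> : klast G ls m = Num.max 0 (Num.ceil (((m%:Z - acc)%:~R / (Dav G)%:~R) : rat)).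
  by rewrite /klast intrB.
case: (posnP (Dav G)) => [->|hD].
  by rewrite invr0 mulr0 ceil0 maxxx.
apply: A2.
have [D hDk] : exists D, Dk G 1 = Some D.
  by move: hD; rewrite /Dav; case: (Dk G 1) => [D|] //; exists D.
have hDv : Dav G = D by rewrite /Dav hDk.
have hDp := min_nat_some hDk.
have hle : (size R <= size Ts2 * Dav G)%N.
  rewrite (perm_size hp2) size_flatten hDv; apply: sumn_size_le => T /hall2.
  exact: min_len hDp.
by apply: (le_trans hr); rewrite lez_nat.
Qed.

Lemma split_g (G : finZmodType) (S : seq G) g (Ts : seq (seq G)) k :
  (forall T, T \in Ts -> minimal_zero_sum T) ->
  perm_eq (rcons S g) (flatten Ts) -> (k < size Ts)%N -> has_disjoint_zs k S.
Proof.
move=> hall hp hk.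
have hg : g \in flatten Ts by rewrite -(perm_mem hp) mem_rcons mem_head.
have [T0 hT0 hgT0] := flattenP hg.
set Ts' := rem T0 Ts.
have h1 : perm_eq Ts (T0 :: Ts') by apply: perm_to_rem.
have h2 : perm_eq T0 (g :: rem g T0) by apply: perm_to_rem.
have hS : perm_eq S (rem g T0 ++ flatten Ts').
  rewrite -(perm_cons g); apply: (perm_trans (y := rcons S g)).
    by rewrite perm_sym perm_rcons.
  apply: (perm_trans hp); apply: (perm_trans (perm_flatten h1)) => /=.
  by rewrite -cat_cons perm_cat2r.
have hs' : (k <= size Ts')%N by rewrite size_rem //; case: (size Ts) hk.
exists (take k Ts'), (flatten (drop k Ts') ++ rem g T0); split.
- by rewrite size_take; case: ltnP => // h; apply/eqP; rewrite eqn_leq hs' h.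
- move=> T /mem_take hT.
  have [hne hz _] := hall T (mem_rem hT).
  by [].
- apply: (perm_trans hS).
  by rewrite -{1}(cat_take_drop k Ts') flatten_cat perm_catCA perm_cat2l perm_catC.
Qed.

Lemma zero_sum_rcons (G : finZmodType) (S : seq G) :
  zero_sum (rcons S (- seq_sum S)).
Proof. by rewrite /zero_sum -cats1 seq_sum_cat /seq_sum big_seq1 subrr. Qed.

Theorem proposition3p2 (G : finZmodType) (ls : seq nat) :
  (forall l, l \in ls -> (0 < l)%N) -> sorted ltn ls ->
  (forall B : seq G, zero_sum B ->
     exists t : nat, in_L B t /\ ktot G ls (size B) <= t%:Z) /\
  (forall k M : nat, (0 < k)%N -> (0 < M)%N ->
     ktot G ls M <= k%:Z ->
     (forall M' : nat, (0 < M')%N -> ktot G ls M' <= k%:Z -> (M' <= M)%N) ->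
     exists d, Dk G k = Some d /\ (d <= M)%N).
Proof.
move=> hpos _; split; first exact: part1.
move=> k M hk hM hkM hmax; apply: min_nat_le => S hS.
case: (classic (has_disjoint_zs k S)) => // hn; exfalso.
have [t [[Ts [hsz hall hp]] hkt]] := part1 hpos (zero_sum_rcons S).
have ht : (t <= k)%N.
  rewrite leqNgt; apply/negP => hlt; apply: hn.
  by apply: (split_g hall hp); rewrite hsz.
have := hmax (size (rcons S (- seq_sum S))).
rewrite size_rcons => /(_ isT).
have -> : (ktot G ls (size S).+1 <= k%:Z) = true.
  by rewrite -(size_rcons S (- seq_sum S)); apply: (le_trans hkt); rewrite lez_nat.
by move=> /(_ isT) h; move: (leq_trans h hS); rewrite ltnn.
Qed.
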